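(* For every $n\geq1$, $r(n)$ equals the number of cyclic and palindromic compositions of $n$ with all parts in $\{2,3\}$, i.e. the number of equivalence classes (under cyclic rotation and reversal) of sequences $(a_1,\dots,a_m)$, $m\geq1$, $a_i\in\{2,3\}$, $\sum_i a_i=n$, such that the reversed sequence $(a_m,\dots,a_1)$ is a cyclic rotation of $(a_1,\dots,a_m)$.
   Context: The (shifted) Padovan sequence is $q(1)=0$, $q(2)=1$, $q(3)=1$, $q(n)=q(n-2)+q(n-3)$ for $n\geq4$. The sequence $r$ is defined by $r(2k-1)=q(k)$ and $r(2k)=q(k+2)$ for $k\geq1$. *)

(* Defs.v *)
From mathcomp Require Import all_boot.
Set Implicit Arguments. Unset Strict Implicit. Unset Printing Implicit Defensive.

(* Shifted Padovan sequence: q 1 = 0, q 2 = 1, q 3 = 1,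
   q n = q (n-2) + q (n-3) for n >= 4.  (q 0 is never used.) *)
Fixpoint q (n : nat) : nat :=
  match n with
  | 0 | 1 => 0
  | 2 | 3 => 1
  | (((m.+1 as j).+1 as k).+1).+1 => q k + q j
  end.

Definition r (n : nat) : nat :=
  if odd n then q (n.+1)./2 else q (n./2 + 2).

Fixpoint words23 (k : nat) : seq (seq nat) :=
  match k with
  | 0 => [:: [::]]
  | k.+1 => [seq x :: w | x <- [:: 2; 3], w <- words23 k]
  end.

(* All words of length at most n over {2,3} (a finite universe containing
   every composition of n with parts in {2,3}, since parts are >= 2). *)
Definition cand (n : nat) : seq (seq nat) :=
  flatten [seq words23 k | k <- iota 0 n.+1].

Definition comp23 (n : nat) (s : seq nat) : bool :=
  [&& 0 < size s, all (fun a => (a == 2) || (a == 3)) s & sumn s == n].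

Definition cyc_pal (s : seq nat) : bool :=
  has (fun k => rev s == rot k s) (iota 0 (size s)).

Definition dih_equiv (s t : seq nat) : bool :=
  has (fun k => (t == rot k s) || (t == rot k (rev s))) (iota 0 (size s)).

Definition CP23 (n : nat) : seq (seq nat) :=
  undup [seq s <- cand n | comp23 n s && cyc_pal s].

(* Number of equivalence classes: each class is represented by the list of
   its members in CP23 n; count the distinct such lists. *)
Definition num_cyc_pal_classes (n : nat) : nat :=
  size (undup [seq [seq t <- CP23 n | dih_equiv s t] | s <- CP23 n]).

(* Main.v *)
Require Import Defs.
From mathcomp Require Import all_boot.
From mathcomp Require Import zify.
Set Implicit Arguments. Unset Strict Implicit. Unset Printing Implicit Defensive.

Section Rot.
Variable T : eqType.
Implicit Types x s t : seq T.

Definition rotm k x := rot (k %% size x) x.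

Lemma rot_le_mod k x : k <= size x -> rot k x = rot (k %% size x) x.
Proof.
rewrite leq_eqVlt => /orP[/eqP->|lt]; last by rewrite modn_small.
by rewrite modnn rot0 rot_size.
Qed.

Lemma size_rotm k x : size (rotm k x) = size x.
Proof. by rewrite size_rot. Qed.

Lemma rotm_add a b x : rotm a (rotm b x) = rotm (a + b) x.
Proof.
rewrite /rotm size_rot; case: (posnP (size x)) => [/size0nil->|m0] //.
have ha := ltn_pmod a m0; have hb := ltn_pmod b m0.
rewrite rot_add_mod; [|exact: ltnW|exact: ltnW]; case: ifP => H.
  by rewrite rot_le_mod // modnDm.
rewrite rot_le_mod; last by rewrite leq_subLR leq_add // ltnW.
rewrite -modnDm; congr (rot _ x).
have HX : size x <= a %% size x + b %% size x by rewrite ltnW // ltnNge H.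
by rewrite -[in RHS](subnK HX) modnDr.
Qed.

Lemma rotm_mod k x : rotm (k %% size x) x = rotm k x.
Proof. by rewrite /rotm modn_mod. Qed.

Lemma rotm_size x : rotm (size x) x = x.
Proof. by rewrite /rotm modnn rot0. Qed.

Lemma rotm_mul j x : rotm (j * size x) x = x.
Proof. by rewrite /rotm modnMl rot0. Qed.

Lemma rotm0 x : rotm 0 x = x.
Proof. by rewrite /rotm mod0n rot0. Qed.

Lemma rev_rotm k x : rev (rotm k x) = rotm (size x - k %% size x) (rev x).
Proof.
rewrite /rotm rev_rot /rotr size_rev; case: (posnP (size x)) => [/size0nil->|m0] //.
by rewrite rot_le_mod ?size_rev ?leq_subr.
Qed.

Lemma rot1_rotm x : rot 1 x = rotm 1 x.
Proof.
by rewrite /rotm; case: x => [|a [|b x]].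
Qed.
End Rot.

Section Per.
Variable T : eqType.
Variable x : seq T.
Hypothesis m0 : 0 < size x.

Lemma per_ex : exists j, (0 < j) && (rotm j x == x).
Proof. by exists (size x); rewrite m0 rotm_size eqxx. Qed.

Definition per := ex_minn per_ex.

Lemma per_pos : 0 < per.
Proof. by rewrite /per; case: ex_minnP => p /andP[]. Qed.

Lemma rotm_per : rotm per x = x.
Proof. by rewrite /per; case: ex_minnP => p /andP[_ /eqP]. Qed.

Lemma per_min j : 0 < j -> rotm j x = x -> per <= j.
Proof.
move=> j0 hj; rewrite /per; case: ex_minnP => p _ H; apply: H.
by rewrite j0 hj eqxx.
Qed.

Lemma rotm_mulper k : rotm (k * per) x = x.
Proof.
elim: k => [|k IH]; first by rewrite mul0n rotm0.
by rewrite mulSn -rotm_add IH rotm_per.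
Qed.

Lemma rotm_modper j : rotm (j %% per) x = rotm j x.
Proof. by rewrite {2}(divn_eq j per) addnC -rotm_add rotm_mulper. Qed.

Lemma rotm_fix j : rotm j x = x -> j %% per = 0.
Proof.
move=> hj; apply/eqP; rewrite -leqn0 leqNgt; apply/negP => pos.
have := per_min pos; rewrite rotm_modper => /(_ hj).
by rewrite leqNgt ltn_pmod // per_pos.
Qed.

Lemma rotm_eqP a b : (rotm a x == rotm b x) = (a == b %[mod per]).
Proof.
apply/eqP/eqP => [E|E]; last by rewrite -rotm_modper E rotm_modper.
set u := size x - a %% size x.
have Ha : rotm (u + a) x = x.
  rewrite /u {2}(divn_eq a (size x)) addnCA subnK; last exact: ltnW (ltn_pmod _ m0).
  by rewrite -rotm_add rotm_size rotm_mul.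
have Hb : rotm (u + b) x = x by rewrite -rotm_add -E rotm_add.
apply/eqP; rewrite -(eqn_modDl u); apply/eqP.
by rewrite (rotm_fix Ha) (rotm_fix Hb).
Qed.

Lemma per_dvd : per %| size x.
Proof. by apply/eqP/rotm_fix; rewrite rotm_size. Qed.

End Per.

Lemma sumn_map_count (T : Type) (P : pred T) s : sumn [seq (P j : nat) | j <- s] = count P s.
Proof. by elim: s => //= a s ->. Qed.

Lemma sumn_mapD (T : Type) (f g : T -> nat) s :
  sumn [seq f j + g j | j <- s] = sumn (map f s) + sumn (map g s).
Proof. by elim: s => //= a s ->; rewrite addnACA. Qed.

Lemma sum_pairs (g : nat -> nat) k :
  sumn [seq g (i + i) + g (i + i).+1 | i <- iota 0 k] = sumn (map g (iota 0 (k + k))).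
Proof.
elim: k => // k IH.
rewrite -addn1 iotaD map_cat sumn_cat IH /= !add0n.
rewrite (_ : k + 1 + (k + 1) = (k + k) + 2); last by lia.
by rewrite [in RHS]iotaD map_cat sumn_cat /= !add0n !addn0 addnA.
Qed.

Lemma two_sols p c : 0 < p ->
  sumn [seq (c == i + i %[mod p]) + (c == (i + i).+1 %[mod p]) | i <- iota 0 p] = 2.
Proof.
move=> p0.
rewrite (sum_pairs (fun j => (c == j %[mod p]) : nat)) iotaD map_cat sumn_cat add0n.
rewrite -(addn0 p) iotaDl addn0 -map_comp.
have E : ((fun j => nat_of_bool (c == j %[mod p])) \o addn p) =1 (fun j => nat_of_bool (c == j %[mod p])).
  by move=> j /=; rewrite modnDl.
rewrite (eq_map E).
rewrite addnn; suff -> : sumn [seq nat_of_bool (c == j %[mod p]) | j <- iota 0 p] = 1 by [].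
rewrite sumn_map_count.
rewrite (@eq_in_count _ _ (pred1 (c %% p))); last first.
  by move=> j; rewrite mem_iota add0n /= => jp; rewrite (modn_small jp) eq_sym.
by rewrite count_uniq_mem ?iota_uniq // mem_iota add0n ltn_pmod.
Qed.

Section Cls.
Variable T : eqType.
Definition fw (t : seq T) : nat := (rev t == t) + (rev t == rot 1 t).

Variable x : seq T.
Hypothesis m0 : 0 < size x.

Lemma wrap0 i : (size x - i %% size x + i) %% per m0 = 0.
Proof.
rewrite {2}(divn_eq i (size x)) addnCA subnK; last exact: ltnW (ltn_pmod _ m0).
apply/eqP; apply: dvdn_add; [exact: dvdn_mull (per_dvd m0)|exact: per_dvd].
Qed.

Lemma class_sum c : rev x = rotm c x ->
  sumn [seq fw (rotm i x) | i <- iota 0 (per m0)] = 2.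
Proof.
move=> hc; rewrite -(two_sols c (per_pos m0)); congr sumn; apply: eq_map => i.
rewrite /fw rev_rotm hc rotm_add rot1_rotm !rotm_add !rotm_eqP //.
have K : forall a b, (a == b %[mod per m0]) = (a + i == b + i %[mod per m0]) by move=> a b; rewrite eqn_modDr.
rewrite (K _ i) (K (size x - _ + c) (1 + i)).
rewrite (addnAC (size x - i %% size x) c i) -(modnDml (size x - i %% size x + i)) wrap0 add0n.
by rewrite add1n addSn.
Qed.
End Cls.

Lemma sumn_big (T : Type) (f : T -> nat) s : sumn (map f s) = \sum_(t <- s) f t.
Proof. by rewrite sumnE big_map. Qed.

Section Part.
Variable T : eqType.
Variables (U : seq T) (E : T -> T -> bool) (f : T -> nat).
Hypothesis Uu : uniq U.
Hypothesis Erefl : forall s, s \in U -> E s s.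
Hypothesis Esym : forall s t, s \in U -> t \in U -> E s t -> E t s.
Hypothesis Etrans : forall s t u, s \in U -> t \in U -> u \in U -> E s t -> E t u -> E s u.
Hypothesis H2 : forall s, s \in U -> \sum_(t <- filter (E s) U) f t = 2.

Let K := undup [seq filter (E s) U | s <- U].

Lemma cls_eq s t : s \in U -> t \in U -> E s t -> filter (E s) U = filter (E t) U.
Proof.
move=> sU tU st; apply: eq_in_filter => u uU; apply/idP/idP => H.
  exact: Etrans (Esym sU tU st) H.
exact: Etrans st H.
Qed.

Lemma count_cls t : t \in U -> count (fun C => t \in C) K = 1.
Proof.
move=> tU; rewrite (@eq_in_count _ _ (pred1 (filter (E t) U))).
  by rewrite count_uniq_mem ?undup_uniq // /K mem_undup (map_f (fun s => filter (E s) U) tU).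
move=> C; rewrite mem_undup => /mapP[s sU E1]; subst C => /=. rewrite mem_filter tU andbT.
apply/idP/eqP => [st|Est]; first exact: cls_eq.
have : t \in filter (E t) U by rewrite mem_filter tU Erefl.
by rewrite -Est mem_filter => /andP[].
Qed.

Lemma part_sum : \sum_(t <- U) f t = 2 * size K.
Proof.
transitivity (\sum_(t <- U) \sum_(C <- K) ((t \in C) * f t)).
  rewrite big_seq_cond [RHS]big_seq_cond; apply: eq_bigr => t /andP[tU _].
  rewrite -big_distrl /=.
  have -> : \sum_(C <- K) ((t \in C) : nat) = 1 by rewrite -sumn_big sumn_map_count count_cls.
  by rewrite mul1n.
rewrite exchange_big /=.
transitivity (\sum_(C <- K) 2); last by rewrite big_const_seq count_predT iter_addn_0 mulnC.
rewrite [LHS]big_seq_cond [RHS]big_seq_cond; apply: eq_bigr => C /andP[].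
rewrite /K mem_undup => /mapP[s sU ->] _.
rewrite -(H2 sU) big_filter [RHS]big_seq_cond [LHS]big_seq_cond.
rewrite [RHS]big_mkcond [LHS]big_mkcond; apply: eq_bigr => t _.
case tU: (t \in U) => //=; rewrite mem_filter tU andbT.
by case: (E s t); rewrite ?mul1n ?mul0n.
Qed.
End Part.

Definition all23 (s : seq nat) := all (fun a => (a == 2) || (a == 3)) s.

Lemma mem_words23 k t : (t \in words23 k) = (size t == k) && all23 t.
Proof.
elim: k t => [|k IH] t; first by case: t.
case: t => [|a t] /=.
  rewrite !mem_cat in_nil orbF; apply/negbTE/negP => /orP[] /mapP[w _] //.
have E2 : forall b, (a :: t \in [seq b :: w | w <- words23 k]) = (a == b) && (t \in words23 k).
  move=> b; apply/mapP/andP => [[w wk [-> ->]]|[/eqP -> tk]]; first by [].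
  by exists t.
rewrite !mem_cat in_nil orbF !E2 IH eqSS.
by case: (a == 2); case: (a == 3); case: (size t == k); case: (all23 t).
Qed.

Lemma mem_cand n t : (t \in cand n) = (size t <= n) && all23 t.
Proof.
apply/flatten_mapP/andP => [[k] | [tn ta]].
  by rewrite mem_iota mem_words23 => /andP[_ kn] /andP[/eqP -> ->]; split.
by exists (size t); rewrite ?mem_iota ?mem_words23 ?eqxx //=.
Qed.

Lemma size_le_sumn t : all23 t -> size t <= sumn t.
Proof.
elim: t => //= a t IH /andP[ha /IH]; case/orP: ha => /eqP -> h; lia.
Qed.

Lemma rotm_rot_small k (t : seq nat) : k < size t -> rot k t = rotm k t.
Proof. by move=> kt; rewrite /rotm modn_small. Qed.

Lemma cyc_pal_ex (t : seq nat) : cyc_pal t -> exists c, rev t = rotm c t.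
Proof.
by case/hasP => k; rewrite mem_iota add0n => /andP[_ kt] /eqP ->; exists k; rewrite rotm_rot_small.
Qed.

Lemma cyc_pal_rotm (t : seq nat) c : 0 < size t -> rev t = rotm c t -> cyc_pal t.
Proof.
move=> t0 h; apply/hasP; exists (c %% size t); first by rewrite mem_iota add0n ltn_pmod.
by rewrite h.
Qed.

Lemma mem_CP23 n t : 1 <= n ->
  (t \in CP23 n) = [&& all23 t, sumn t == n, 0 < size t & cyc_pal t].
Proof.
move=> n1; rewrite /CP23 mem_undup mem_filter mem_cand /comp23.
apply/idP/idP => [/andP[/andP[/and3P[t0 ta /eqP tn] cp] _]|/and4P[ta /eqP tn t0 cp]].
  by rewrite /all23 ta tn eqxx t0 cp.
rewrite t0 ta tn eqxx cp /=; move: (ta); rewrite /all23 => -> /=.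
by rewrite -tn size_le_sumn.
Qed.

Lemma rotm_inv (t : seq nat) i : rotm (size t - i %% size t) (rotm i t) = t.
Proof.
case: (posnP (size t)) => [/size0nil->|m0] //.
rewrite rotm_add {2}(divn_eq i (size t)) addnCA subnK; last exact: ltnW (ltn_pmod _ m0).
by rewrite /rotm modnDr modnMl rot0.
Qed.

Lemma rotm_CP n t i : 1 <= n -> t \in CP23 n -> rotm i t \in CP23 n.
Proof.
move=> n1; rewrite !mem_CP23 // => /and4P[ta tn t0 cp].
have [c hc] := cyc_pal_ex cp.
have pr : perm_eq (rot (i %% size t) t) t by rewrite perm_rot.
rewrite /rotm size_rot t0 /all23 (perm_all _ pr) -/(all23 t) ta (perm_sumn pr) tn /=.
apply: (@cyc_pal_rotm _ (size t - i %% size t + c + (size t - i %% size t))); first by rewrite size_rot.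
rewrite -/(rotm i t) rotm_add -addnA -(rotm_add (size t - i %% size t + c) (size t - i %% size t + i)).
rewrite -(rotm_add (size t - i %% size t) i) rotm_inv.
by rewrite rev_rotm hc rotm_add.
Qed.

Definition rots (s : seq nat) := [seq rotm i s | i <- iota 0 (size s)].

Lemma mem_rots s t : 0 < size s -> reflect (exists i, t = rotm i s) (t \in rots s).
Proof.
move=> m0; apply: (iffP mapP) => [[i _ ->]|[i ->]]; first by exists i.
by exists (i %% size s); rewrite ?mem_iota ?add0n ?ltn_pmod ?rotm_mod.
Qed.

Lemma dih_rots s c t : 0 < size s -> rev s = rotm c s -> dih_equiv s t = (t \in rots s).
Proof.
move=> m0 hc; apply/hasP/(mem_rots _ m0) => [[k]|[i ->]].
  rewrite mem_iota add0n => /andP[_ ks] /orP[] /eqP ->.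
    by exists k; rewrite rotm_rot_small.
  by exists (k + c); rewrite hc rotm_rot_small ?size_rotm // rotm_add.
exists (i %% size s); first by rewrite mem_iota add0n ltn_pmod.
by rewrite /rotm eqxx.
Qed.


Lemma symU n s : 1 <= n -> s \in CP23 n -> 0 < size s /\ exists c, rev s = rotm c s.
Proof.
move=> n1; rewrite mem_CP23 // => /and4P[_ _ s0 cp]; split => //.
exact: cyc_pal_ex.
Qed.

Lemma dihE n s t : 1 <= n -> s \in CP23 n -> dih_equiv s t = (t \in rots s).
Proof.
move=> n1 /(symU n1) [s0 [c hc]]; exact: dih_rots hc.
Qed.

Lemma class_filter n s (n1 : 1 <= n) (sU : s \in CP23 n) (s0 : 0 < size s) :
  perm_eq (filter (dih_equiv s) (CP23 n)) [seq rotm i s | i <- iota 0 (per s0)].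
Proof.
apply: uniq_perm.
- exact: filter_uniq (undup_uniq _).
- rewrite map_inj_in_uniq ?iota_uniq // => i j; rewrite !mem_iota !add0n => /= ip jp /eqP.
  by rewrite rotm_eqP !modn_small // => /eqP.
move=> t; rewrite mem_filter (dihE _ n1 sU).
apply/andP/mapP => [[/(mem_rots _ s0) [i ->] _]|[i _ ->]].
  exists (i %% per s0); first by rewrite mem_iota add0n ltn_pmod ?per_pos.
  by rewrite rotm_modper.
split; first by apply/(mem_rots _ s0); exists i.
exact: rotm_CP.
Qed.

Lemma main_sum n : 1 <= n -> \sum_(t <- CP23 n) fw t = 2 * num_cyc_pal_classes n.
Proof.
move=> n1; rewrite /num_cyc_pal_classes. apply (@part_sum _ (CP23 n) dih_equiv (@fw _)).
- move=> s sU; rewrite (dihE _ n1 sU); have [s0 _] := symU n1 sU.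
  by apply/(mem_rots _ s0); exists 0; rewrite rotm0.
- move=> s t sU tU; rewrite (dihE _ n1 sU) (dihE _ n1 tU).
  have [s0 _] := symU n1 sU; have [t0 _] := symU n1 tU.
  move/(mem_rots _ s0) => [i ->]; apply/(mem_rots _ _); first by rewrite size_rotm.
  by exists (size s - i %% size s); rewrite rotm_inv.
- move=> s t u sU tU uU; rewrite (dihE t n1 sU) (dihE u n1 tU) (dihE u n1 sU).
  have [s0 _] := symU n1 sU; have [t0 _] := symU n1 tU.
  move=> /(mem_rots _ s0) [i ti] /(mem_rots _ t0) [j uj].
  by apply/(mem_rots _ s0); exists (j + i); rewrite uj ti rotm_add.
move=> s sU; have [s0 [c hc]] := symU n1 sU.
rewrite (perm_big _ (class_filter n1 sU s0)) big_map -sumn_big.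
exact: class_sum hc.
Qed.

Lemma qS m : q m.+4 = q m.+2 + q m.+1.
Proof. by []. Qed.

Lemma r_even j : r (j.*2) = q (j + 2).
Proof. by rewrite /r odd_double doubleK. Qed.

Lemma r_odd j : r (j.*2.+1) = q (j.+1).
Proof. by rewrite /r /= odd_double /= doubleK. Qed.

Lemma r_rec k : r (k + 13) = r (k + 9) + r (k + 7).
Proof.
have [[j ->]|[j ->]] : (exists j, k = j.*2) \/ (exists j, k = j.*2.+1).
  move: (odd_double_half k); case: (odd k) => /= E; [right|left]; by exists k./2.
- have e : forall a, j.*2 + a.*2.+1 = (j + a).*2.+1 by move=> a; rewrite -!muln2; lia.
  rewrite (e 6) (e 4) (e 3) !r_odd.
  have -> : (j + 6).+1 = (j + 3).+4 by lia.
  by rewrite qS; congr (q _ + q _); lia.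
have e : forall a, j.*2.+1 + a.*2.+1 = (j + a.+1).*2 by move=> a; rewrite -!muln2; lia.
rewrite (e 6) (e 4) (e 3) !r_even.
have -> : j + 7 + 2 = (j + 5).+4 by lia.
by rewrite qS; congr (q _ + q _); lia.
Qed.

Fixpoint genPal (n : nat) : seq (seq nat) :=
  match n with
  | 0 => [:: [::]]
  | 1 => [::]
  | 2 => [:: [:: 2]]
  | 3 => [:: [:: 3]]
  | m.+4 => [seq 2 :: rcons x 2 | x <- genPal m] ++
            (if m is k.+2 then [seq 3 :: rcons x 3 | x <- genPal k] else [::])
  end.

Definition palP (t : seq nat) n := [&& all23 t, sumn t == n & rev t == t].

Lemma sumn_rcons x b : sumn (rcons x b) = sumn x + b.
Proof. by rewrite -cats1 sumn_cat /= addn0. Qed.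

Lemma rev_cons_rcons (x : seq nat) a b : rev (a :: rcons x b) = b :: rcons (rev x) a.
Proof. by rewrite rev_cons rev_rcons. Qed.

Lemma genPal_sound n t : t \in genPal n -> palP t n.
Proof.
elim/ltn_ind: n t => n IH t.
case: n IH => [|[|[|[|m]]]] IH //=; try by rewrite !inE => /eqP ->.
have step : forall a k, a \in [:: 2; 3] -> k < m.+4 -> a + k + a = m.+4 ->
   t \in [seq a :: rcons x a | x <- genPal k] -> palP t m.+4.
  move=> a k ha km e /mapP[x /(IH k km) /and3P[xa /eqP xs /eqP xr] ->].
  rewrite /palP /= sumn_rcons rev_cons_rcons xr eqxx andbT.
  rewrite /all23 all_rcons -/(all23 x) xa andbT.
  move: ha; rewrite !inE => /orP[] /eqP ha; subst a; rewrite /= xs; apply/eqP; lia.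
rewrite mem_cat => /orP[].
  by apply: step => //; lia.
case: m IH step => [|[|k]] IH step //.
by apply: step => //; lia.
Qed.

Lemma genPal_complete n t : palP t n -> t \in genPal n.
Proof.
elim/ltn_ind: n t => n IH t /and3P[ta /eqP tn tr].
case: t ta tn tr => [|a t] ta tn tr; first by rewrite -tn.
case/lastP: t ta tn tr => [|x b] ta tn tr.
  by move: ta; rewrite /= andbT => /orP[] /eqP ea; rewrite -tn ea /= ?inE.
move: tr; rewrite rev_cons_rcons eqseq_cons eqseq_rcons => /and3P[/eqP ba /eqP xr _].
subst b; move: ta tn; rewrite /= /all23 all_rcons /= => /andP[ha /andP[_ xa]] tn.
rewrite sumn_rcons in tn.
have xin : forall k, sumn x = k -> x \in genPal k.
  move=> k xk; apply: IH; first by rewrite -tn -xk; case/orP: ha => /eqP ->; lia.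
  by rewrite /palP xk xr !eqxx !andbT.
case/orP: ha => /eqP ea; subst a; rewrite -tn.
  rewrite (_ : 2 + (sumn x + 2) = (sumn x).+4); last by lia.
  by rewrite /= mem_cat; apply/orP; left; apply/mapP; exists x => //; apply: xin.
rewrite (_ : 3 + (sumn x + 3) = (sumn x).+2.+4); last by lia.
by rewrite /= mem_cat; apply/orP; right; apply/mapP; exists x => //; apply: xin.
Qed.

Lemma mem_genPal n t : (t \in genPal n) = palP t n.
Proof. by apply/idP/idP => [/genPal_sound|/genPal_complete]. Qed.

Lemma uniq_genPal n : uniq (genPal n).
Proof.
elim/ltn_ind: n => n IH.
case: n IH => [|[|[|[|m]]]] IH //=.
have inj : forall a, injective (fun x : seq nat => a :: rcons x a).
  by move=> a x y [] /eqP; rewrite eqseq_rcons => /andP[/eqP].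
rewrite cat_uniq (map_inj_uniq (inj 2)) IH //.
case: m IH => [|[|k]] IH; rewrite ?andbT //.
rewrite (map_inj_uniq (inj 3)) (IH k); last by lia.
apply/andP; split=> //; apply/andP; split => //.
by apply/hasPn => y /mapP[x _ ->]; apply/mapP => [[z _ []]].
by lia.
Qed.

Definition genL n : seq (seq nat) :=
  (if n is k.+2 then [seq 2 :: x | x <- genPal k] else [::]) ++
  (if n is k.+3 then [seq 3 :: x | x <- genPal k] else [::]).

Lemma mem_genL n t : 1 <= n ->
  (t \in genL n) = [&& all23 t, sumn t == n & rev t == rot 1 t].
Proof.
move=> n1; case: t => [|a x].
  rewrite /= eq_sym (negbTE (lt0n_neq0 n1)) /genL mem_cat.
  by apply/negbTE/negP => /orP[]; case: n n1 => [|[|[|k]]] //= _ /mapP[].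
rewrite rot1_cons rev_cons eqseq_rcons eqxx andbT /= -/(all23 x).
have mc : forall b L, (a :: x \in [seq b :: y | y <- L]) = (a == b) && (x \in L).
  move=> b L; apply/mapP/andP => [[y yL [-> ->]]|[/eqP -> xL]]; first by [].
  by exists x.
rewrite /genL mem_cat.
case: n n1 => [|[|[|k]]] // _; rewrite ?mc ?mem_genPal /palP ?in_nil ?orbF.
all: case: (eqVneq a 2) => [->|n2]; [|case: (eqVneq a 3) => [->|n3]]; rewrite ?(negbTE n2) ?(negbTE n3) /= ?andbF //.
by rewrite orbF add2n !eqSS.
Qed.

Lemma uniq_genL n : uniq (genL n).
Proof.
rewrite /genL cat_uniq.
have inj : forall a, injective (fun x : seq nat => a :: x) by move=> a x y [].
apply/and3P; split.
- by case: n => [|[|k]] //; rewrite (map_inj_uniq (inj 2)) uniq_genPal.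
- case: n => [|[|[|k]]] //.
  by apply/hasPn => y /mapP[x _ ->]; apply/mapP => [[z _ []]].
- by case: n => [|[|[|k]]] //; rewrite (map_inj_uniq (inj 3)) uniq_genPal.
Qed.

Lemma cnt_pal n : 1 <= n -> count (fun t => rev t == t) (CP23 n) = size (genPal n).
Proof.
move=> n1; rewrite -size_filter; apply/perm_size/uniq_perm.
- exact: filter_uniq (undup_uniq _).
- exact: uniq_genPal.
move=> t; rewrite mem_filter mem_CP23 // mem_genPal /palP.
apply/idP/idP => [/andP[-> /and4P[-> -> _ _]] //|/and3P[ta /eqP tn /eqP tr]].
have t0 : 0 < size t by case: t {ta tr} tn => //= tn; rewrite -tn in n1.
rewrite tr eqxx ta tn eqxx t0 /=.
by apply: (@cyc_pal_rotm _ 0) => //; rewrite rotm0.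
Qed.

Lemma cnt_lpal n : 1 <= n -> count (fun t => rev t == rot 1 t) (CP23 n) = size (genL n).
Proof.
move=> n1; rewrite -size_filter; apply/perm_size/uniq_perm.
- exact: filter_uniq (undup_uniq _).
- exact: uniq_genL.
move=> t; rewrite mem_filter mem_CP23 // mem_genL //.
apply/idP/idP => [/andP[-> /and4P[-> -> _ _]] //|/and3P[ta /eqP tn /eqP tr]].
have t0 : 0 < size t by case: t {ta tr} tn => //= tn; rewrite -tn in n1.
rewrite tr eqxx ta tn eqxx t0 /=.
by apply: (@cyc_pal_rotm _ 1) => //; rewrite -rot1_rotm.
Qed.

Definition Pn m := size (genPal m).

Lemma Pk6 k : Pn k.+2.+4 = Pn k.+2 + Pn k.
Proof. by rewrite /Pn /= size_cat !size_map. Qed.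

Lemma LS k : size (genL k.+3) = Pn k.+1 + Pn k.
Proof. by rewrite /genL size_cat !size_map. Qed.

Definition Tn n := Pn n + size (genL n).

Lemma T_small n : n < 12 -> Tn n.+1 = 2 * r n.+1.
Proof.
do 12 (case: n => [|n]; first by vm_compute).
by [].
Qed.

Lemma T_eq n : 1 <= n -> Tn n = 2 * r n.
Proof.
elim/ltn_ind: n => n IH n1.
case: (ltnP n 13) => nl.
  by case: n IH n1 nl => // n _ _ nl; apply: T_small.
have [k nk] : exists k, n = k + 13 by exists (n - 13); rewrite subnK.
subst n.
have h9 : Tn (k + 9) = 2 * r (k + 9) by apply: IH; lia.
have h7 : Tn (k + 7) = 2 * r (k + 7) by apply: IH; lia.
rewrite r_rec mulnDr -h9 -h7.
have -> : k + 13 = k.+4.+4.+4.+1 by rewrite addnC.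
have -> : k + 9 = k.+4.+4.+1 by rewrite addnC.
have -> : k + 7 = k.+4.+3 by rewrite addnC.
rewrite /Tn !LS.
rewrite (Pk6 k.+4.+3) (Pk6 k.+4.+1) (Pk6 k.+4) (Pk6 k.+3).
lia.
Qed.

Theorem proposition3p3 (n : nat) : 1 <= n -> r n = num_cyc_pal_classes n.
Proof.
move=> n1; apply/eqP; rewrite -(eqn_pmul2l (isT : 0 < 2)); apply/eqP.
rewrite -main_sum // -T_eq // /Tn /Pn -cnt_pal // -cnt_lpal //.
rewrite -sumn_big (sumn_mapD (fun t => nat_of_bool (rev t == t)) (fun t => nat_of_bool (rev t == rot 1 t))).
by rewrite !sumn_map_count.
Qed.
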